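(* For every real $x$ and every natural number $n$, \[0 < \mathrm{LB}_{\exp}(x,n) \le \exp(x) \le \mathrm{UB}_{\exp}(x,n).\]
   Context: For $-1 \le x < 0$ and natural $n$: \[\mathrm{LB}_{\exp}(x,n) = \sum_{i=0}^{2(n+1)+1}\frac{x^i}{i!},\qquad \mathrm{UB}_{\exp}(x,n) = \sum_{i=0}^{2(n+1)}\frac{x^i}{i!}.\] Further: $\mathrm{LB}_{\exp}(0,n)=\mathrm{UB}_{\exp}(0,n)=1$; for $x<-1$, with $k = -\lfloor x\rfloor$: $\mathrm{LB}_{\exp}(x,n) = \left(\mathrm{LB}_{\exp}(x/k,n)\right)^{k}$ and $\mathrm{UB}_{\exp}(x,n) = \left(\mathrm{UB}_{\exp}(x/k,n)\right)^{k}$; for $x>0$: $\mathrm{LB}_{\exp}(x,n) = 1/\mathrm{UB}_{\exp}(-x,n)$ and $\mathrm{UB}_{\exp}(x,n) = 1/\mathrm{LB}_{\exp}(-x,n)$. *)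

(* Defs.v *)
From Stdlib Require Import Reals Factorial.
Open Scope R_scope.

(* Truncated Taylor polynomial sum_{i=0}^{N} x^i / i!  (sum_f_R0 f N has N+1 terms). *)
Definition taylor_exp (x : R) (N : nat) : R :=
  sum_f_R0 (fun i => x ^ i / INR (fact i)) N.

Definition lb_base (x : R) (n : nat) : R := taylor_exp x (2 * (n + 1) + 1).
Definition ub_base (x : R) (n : nat) : R := taylor_exp x (2 * (n + 1)).

(* k = - floor x  (Int_part is the floor function). *)
Definition kfl (x : R) : nat := Z.to_nat (- Int_part x).

Definition LB_exp_nonpos (x : R) (n : nat) : R :=
  if Rle_dec (-1) x then lb_base x n
  else (lb_base (x / INR (kfl x)) n) ^ (kfl x).
Definition UB_exp_nonpos (x : R) (n : nat) : R :=
  if Rle_dec (-1) x then ub_base x n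
  else (ub_base (x / INR (kfl x)) n) ^ (kfl x).

Definition LB_exp (x : R) (n : nat) : R :=
  if Req_EM_T x 0 then 1
  else if Rlt_dec x 0 then LB_exp_nonpos x n
  else / UB_exp_nonpos (- x) n.

Definition UB_exp (x : R) (n : nat) : R :=
  if Req_EM_T x 0 then 1
  else if Rlt_dec x 0 then UB_exp_nonpos x n
  else / LB_exp_nonpos (- x) n.

(* Main.v *)
Require Import Defs.
From Stdlib Require Import Reals.
From Stdlib Require Import Lra Lia ZArith.
Open Scope R_scope.

Lemma exp_sum_cv (y : R) :
  Un_cv (fun N => taylor_exp y N) (exp y).
Proof.
  unfold exp; destruct (exist_exp y) as [l Hl]; simpl.
  intros eps He; destruct (Hl eps He) as [N HN]; exists N; intros n Hn.
  specialize (HN n Hn). unfold taylor_exp.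
  replace (sum_f_R0 (fun i => y ^ i / INR (fact i)) n)
    with (sum_f_R0 (fun i => / INR (fact i) * y ^ i) n); [exact HN|].
  apply sum_eq; intros; unfold Rdiv; ring.
Qed.

Lemma taylor_alt (y : R) (N : nat) :
  taylor_exp y N = sum_f_R0 (tg_alt (fun i => (-y) ^ i / INR (fact i))) N.
Proof.
  unfold taylor_exp, tg_alt. apply sum_eq; intros i _.
  replace y with ((-1) * (-y)) at 1 by ring. rewrite Rpow_mult_distr.
  unfold Rdiv; ring.
Qed.

Lemma base_bounds (y : R) (m : nat) : -1 <= y <= 0 ->
  taylor_exp y (S (2 * m)) <= exp y <= taylor_exp y (2 * m).
Proof.
  intros Hy. rewrite !taylor_alt. apply alternated_series_ineq.
  - intros i. simpl pow. rewrite fact_simpl, mult_INR.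
    assert (0 < INR (fact i)) by apply INR_fact_lt_0.
    assert (1 <= INR (S i)) by (rewrite S_INR; pose proof (pos_INR i); lra).
    assert (0 <= (-y) ^ i) by (apply pow_le; lra).
    unfold Rdiv. rewrite Rinv_mult.
    apply Rle_trans with ((-y) ^ i * / INR (fact i) * / INR (S i)).
    + replace (- y * (-y) ^ i * (/ INR (S i) * / INR (fact i)))
        with ((-y) * ((-y) ^ i * / INR (fact i) * / INR (S i))) by ring.
      assert (0 <= (-y) ^ i * / INR (fact i) * / INR (S i)).
      { apply Rmult_le_pos; [apply Rmult_le_pos|]; try lra;
        left; apply Rinv_0_lt_compat; lra. }
      nra.
    + rewrite <- (Rmult_1_r ((-y) ^ i * / INR (fact i))) at 2.
      apply Rmult_le_compat_l.
      * apply Rmult_le_pos; [lra|left; apply Rinv_0_lt_compat; lra].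
      * rewrite <- Rinv_1. apply Rinv_le_contravar; lra.
  - apply cv_speed_pow_fact.
  - intros eps He; destruct (exp_sum_cv y eps He) as [N HN]; exists N;
    intros n Hn; rewrite <- taylor_alt; apply HN; exact Hn.
Qed.

Lemma lb_pos (y : R) (n : nat) : -1 <= y <= 0 -> 0 < lb_base y n.
Proof.
  intros Hy. unfold lb_base.
  assert (H3 : 0 < taylor_exp y 3).
  { unfold taylor_exp; simpl. destruct (Req_dec y 0).
    - subst; lra.
    - assert (0 < y*y) by nra. nra. }
  assert (forall k, taylor_exp y 3 <= taylor_exp y (2 * k + 3)).
  { induction k. simpl; lra.
    replace (2 * S k + 3)%nat with (S (S (2 * k + 3))) by lia.
    unfold taylor_exp in *. rewrite (tech5 _ (S (2*k+3))), (tech5 _ (2*k+3)).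
    set (j := (2 * k + 3)%nat) in *.
    assert (0 < INR (fact (S j))) by apply INR_fact_lt_0.
    assert (Hf : INR (fact (S (S j))) = INR (S (S j)) * INR (fact (S j)))
      by (rewrite fact_simpl, mult_INR; reflexivity).
    assert (1 <= INR (S (S j))) by (rewrite !S_INR; pose proof (pos_INR j); lra).
    assert (Hp : 0 <= y ^ (S j)).
    { replace (S j) with (2 * (k + 2))%nat by (unfold j; lia).
      rewrite pow_mult. apply pow_le. nra. }
    rewrite Hf. change (y ^ S (S j)) with (y * y ^ S j).
    assert (y ^ S j / INR (fact (S j)) + y * y ^ S j / (INR (S (S j)) * INR (fact (S j))) >= 0).
    { unfold Rdiv. rewrite Rinv_mult.
      set (a := y ^ S j * / INR (fact (S j))).
      assert (0 <= a) by (apply Rmult_le_pos; [lra| left; apply Rinv_0_lt_compat; lra]).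
      assert (0 < / INR (S (S j)) <= 1).
      { split. apply Rinv_0_lt_compat; lra. rewrite <- Rinv_1; apply Rinv_le_contravar; lra. }
      replace (y * y ^ S j * (/ INR (S (S j)) * / INR (fact (S j))))
        with (y * / INR (S (S j)) * a) by (unfold a; ring).
      assert (-1 <= y * / INR (S (S j))) by nra.
      nra. }
    lra. }
  specialize (H n). replace (2 * (n + 1) + 1)%nat with (2 * n + 3)%nat by lia. lra.
Qed.

Lemma exp_pow_k (y : R) (k : nat) : exp (INR k * y) = exp y ^ k.
Proof.
  induction k. simpl. rewrite Rmult_0_l; apply exp_0.
  rewrite S_INR. replace ((INR k + 1) * y) with (y + INR k * y) by ring.
  rewrite exp_plus, IHk. reflexivity.
Qed.

Lemma kfl_props (x : R) : x < -1 ->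
  1 <= INR (kfl x) /\ -1 <= x / INR (kfl x) < 0.
Proof.
  intros Hx. destruct (base_Int_part x) as [H1 H2].
  assert (Hk : INR (kfl x) = - IZR (Int_part x)).
  { unfold kfl. rewrite INR_IZR_INZ, Z2Nat.id.
    - rewrite opp_IZR; reflexivity.
    - assert (IZR (Int_part x) < 0) by lra.
      apply lt_IZR in H. lia. }
  assert (1 <= INR (kfl x)).
  { rewrite Hk. assert (IZR (Int_part x) < 0) by lra.
    apply lt_IZR in H. assert (Int_part x <= -1)%Z by lia.
    apply IZR_le in H0. lra. }
  split; [lra|]. split.
  - apply (Rmult_le_reg_r (INR (kfl x))); [lra|].
    unfold Rdiv; rewrite Rmult_assoc, Rinv_l by lra. lra.
  - unfold Rdiv. assert (0 < / INR (kfl x)) by (apply Rinv_0_lt_compat; lra). nra.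
Qed.

Lemma nonpos_bounds (x : R) (n : nat) : x < 0 ->
  0 < LB_exp_nonpos x n /\ LB_exp_nonpos x n <= exp x /\ exp x <= UB_exp_nonpos x n.
Proof.
  intros Hx. unfold LB_exp_nonpos, UB_exp_nonpos.
  destruct (Rle_dec (-1) x) as [Hle|Hle].
  - pose proof (base_bounds x (n + 1) ltac:(lra)).
    pose proof (lb_pos x n ltac:(lra)).
    unfold lb_base, ub_base. replace (2 * (n + 1) + 1)%nat with (S (2 * (n + 1))) by lia.
    unfold lb_base in H0. replace (2 * (n + 1) + 1)%nat with (S (2 * (n + 1))) in H0 by lia.
    lra.
  - destruct (kfl_props x ltac:(lra)) as [Hk Hy].
    set (k := kfl x) in *. set (y := x / INR k) in *.
    pose proof (base_bounds y (n + 1) ltac:(lra)).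
    pose proof (lb_pos y n ltac:(lra)).
    unfold lb_base, ub_base in *.
    replace (2 * (n + 1) + 1)%nat with (S (2 * (n + 1))) in * by lia.
    assert (Hx' : x = INR k * y) by (unfold y, Rdiv; field; lra).
    rewrite Hx', exp_pow_k.
    split; [apply pow_lt; lra|].
    split; apply pow_incr; lra.
Qed.

Theorem proposition6 (x : R) (n : nat) :
  0 < LB_exp x n /\ LB_exp x n <= exp x /\ exp x <= UB_exp x n.
Proof.
  unfold LB_exp, UB_exp.
  destruct (Req_EM_T x 0) as [->|H0].
  - rewrite exp_0; lra.
  - destruct (Rlt_dec x 0) as [Hl|Hl].
    + apply nonpos_bounds; exact Hl.
    + destruct (nonpos_bounds (- x) n ltac:(lra)) as [A [B C]].
      assert (Hex : exp x = / exp (- x)) by (rewrite exp_Ropp, Rinv_inv; reflexivity).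
      pose proof (exp_pos (- x)).
      rewrite Hex. split; [apply Rinv_0_lt_compat; lra|].
      split; apply Rinv_le_contravar; lra.
Qed.
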